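(* Let $P=(I,\emptyset,\{\omega\})$ be a reduced presentation. Then $\mathbf C_\omega$ is embeddable in $\mathbf B_\Delta$.
   Context: Wajsberg hoops: basic hoops satisfying $(x\to y)\to y\approx(y\to x)\to x$. $\mathbf{\L}_n=\Gamma(\mathbb Z,n)$ is the Wajsberg hoop on $\{0,\dots,n\}$ with $ab=\max\{a+b-n,0\}$, $a\to b=\min\{n-a+b,n\}$; $\mathbf C_\omega$ is the negative cone of $\mathbb Z$, i.e. the free monoid on one generator $c$ with $c^l\to c^m=c^{\max(l-m,0)}$. $X{\downarrow}$ = set of divisors of elements of $X$. A presentation $(I,\emptyset,\{\omega\})$ with $I$ a finite subset of $\mathbb N\setminus\{0\}$ is reduced if no $m\in I$ divides any element of $I\setminus\{m\}$. For such $P$: $\Delta=\{(k,h,2):0\le h<k\in I{\downarrow},\gcd(k,h)=1\}\cup\{(0,0,3)\}$; $\mathbf A_\Delta=\prod_{(k,h,2)\in\Delta}\mathbf{\L}_k\times\mathbf C_\omega$ (factor $\mathbf{\L}_k$ at index $(k,h,2)$, factor $\mathbf C_\omega$ at index $(0,0,3)$); $\bar g(k,h,2)=h\in\mathbf{\L}_k$, $\bar g(0,0,3)=c$; $\mathbf B_\Delta$ is the subalgebra of $\mathbf A_\Delta$ generated by $\bar g$. *)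

(* Defs.v *)
From HB Require Import structures.
From mathcomp Require Import all_boot.
Set Implicit Arguments. Unset Strict Implicit. Unset Printing Implicit Defensive.

(* L_n = Gamma(Z, n) on {0,...,n}:  ab = max(a+b-n, 0),                     *)
(* a -> b = min(n-a+b, n), unit n.  (Truncated nat subtraction = max(.,0).) *)
Definition Lmul (n a b : nat) : nat := a + b - n.
Definition Limp (n a b : nat) : nat := minn (n - a + b) n.
Definition Lone (n : nat) : nat := n.

(* C_omega = negative cone of Z = free monoid on c; c^l is encoded by l.   *)
Definition Cmul (l m : nat) : nat := l + m.
Definition Cimp (l m : nat) : nat := m - l.
Definition Cone : nat := 0.

(* I{down}: divisors of elements of I (I a finite set of positive naturals, *)
(* given as a sequence); all such divisors lie in 1 .. max I.              *)
Definition Idown (I : seq nat) : seq nat :=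
  [seq d <- iota 1 (\max_(m <- I) m) | has (fun m => d %| m) I].

(* triple (k,h,2) of the paper is encoded by the pair (k,h).               *)
Definition Delta2 (I : seq nat) : seq (nat * nat) :=
  [seq (k, h) | k <- Idown I, h <- [seq h <- iota 0 k | coprime k h]].

Definition DIdx (I : seq nat) : finType := seq_sub (Delta2 I).

(* A_Delta = prod_{(k,h,2) in Delta} L_k  x  C_omega :                     *)
(* first component = the L_k-factors, second component = the C_omega      *)
(* factor at index (0,0,3).                                                *)
Definition AD (I : seq nat) : Type := ({ffun DIdx I -> nat} * nat)%type.

Definition ADmul (I : seq nat) (x y : AD I) : AD I :=
  ([ffun i => Lmul (ssval i).1 (x.1 i) (y.1 i)], Cmul x.2 y.2).
Definition ADimp (I : seq nat) (x y : AD I) : AD I :=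
  ([ffun i => Limp (ssval i).1 (x.1 i) (y.1 i)], Cimp x.2 y.2).
Definition ADone (I : seq nat) : AD I :=
  ([ffun i => Lone (ssval i).1], Cone).

Definition gbar (I : seq nat) : AD I := ([ffun i => (ssval i).2], 1%N).

Inductive inB (I : seq nat) : AD I -> Prop :=
  | inB_gen : inB (gbar I)
  | inB_one : inB (ADone I)
  | inB_mul x y : inB x -> inB y -> inB (ADmul x y)
  | inB_imp x y : inB x -> inB y -> inB (ADimp x y).

Definition reduced (I : seq nat) : Prop :=
  (forall m, m \in I -> 0 < m) /\
  (forall m m', m \in I -> m' \in I -> m != m' -> ~~ (m %| m')).

Definition C_embeds_in_B (I : seq nat) : Prop :=
  exists e : nat -> AD I,
    [/\ injective e,
        forall l, inB (e l),
        e Cone = ADone I,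
        forall l m, e (Cmul l m) = ADmul (e l) (e m)
      & forall l m, e (Cimp l m) = ADimp (e l) (e m)].

(* Main.v *)
Require Import Defs.
From mathcomp Require Import all_boot.
From mathcomp Require Import zify.

Set Implicit Arguments. Unset Strict Implicit.

Section S.
Variable I : seq nat.

Fixpoint pw (n : nat) : AD I :=
  match n with 0 => ADone I | n.+1 => ADmul (pw n) (gbar I) end.

Lemma pw_inB n : inB (pw n).
Proof. elim: n => [|n IH] /=; [exact: inB_one | exact: inB_mul IH (inB_gen I)]. Qed.

Lemma pw2 n : (pw n).2 = n.
Proof. by elim: n => //= n ->; rewrite /Cmul addn1. Qed.

Lemma hk (i : DIdx I) : (ssval i).2 < (ssval i).1.
Proof.
case: i => [[k h] /= Hi].
move: Hi; rewrite /Delta2 => /allpairsPdep [k' [h' [_ Hh [-> ->]]]] /=.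
by move: Hh; rewrite mem_filter mem_iota add0n => /and3P [].
Qed.

Lemma pw1 n (i : DIdx I) : (pw n).1 i <= (ssval i).1 - n.
Proof.
have := hk i.
elim: n => [|n IH] /= H; first by rewrite ffunE /Lone subn0.
rewrite ffunE /Lmul /gbar ffunE /=; have := IH H; move: H; case: (ssval i) => k h /=; move: ((pw n).1 i) => a; lia.
Qed.

Definition K := \max_(i : DIdx I) (ssval i).1.

Definition y := ADimp (pw K) (pw K.+1).

Lemma y_inB : inB y.
Proof. exact: inB_imp (pw_inB _) (pw_inB _). Qed.

Definition e (l : nat) : AD I := ([ffun i => (ssval i).1], l).

Lemma y_eq : y = e 1.
Proof.
rewrite /y /e /ADimp pw2 pw2 /Cimp subSn // subnn; congr (_, _).
apply/ffunP => i; rewrite !ffunE /Limp.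
have Hk : (ssval i).1 <= K by rewrite /K; apply: (leq_bigmax i).
have := pw1 K i; have := pw1 K.+1 i. lia.
Qed.

Lemma e_inB l : inB (e l).
Proof.
elim: l => [|l IH]; first exact: inB_one.
have -> : e l.+1 = ADmul (e l) y.
  rewrite y_eq /e /ADmul /Cmul addn1; congr (_, _).
  by apply/ffunP => i; rewrite !ffunE /Lmul addnK.
exact: inB_mul IH y_inB.
Qed.
End S.

Theorem theorem3p11 (I : seq nat) :
  reduced I -> C_embeds_in_B I.
Proof.
move=> _; exists (@e I); split.
- by move=> l m [].
- exact: e_inB.
- by [].
- move=> l m; rewrite /e /ADmul; congr (_, _).
  by apply/ffunP => i; rewrite !ffunE /Lmul addnK.
- move=> l m; rewrite /e /ADimp; congr (_, _).
  apply/ffunP => i; by rewrite !ffunE /Limp subnn add0n minnn.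
Qed.
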